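(* Let $\mathcal{H}$ be a complex Hilbert space, $A\in\mathcal{B}(\mathcal{H})$ positive, $S\in\mathcal{B}_A(\mathcal{H})$, and let $m_A(S)=\inf_{\|z\|_A=1}\|Sz\|_A$. Then $$d\omega_A^2(S)\ge\max\left\{\left(1+m_A^2(S)\right)\omega_A^2(S),\ \left(1+\|S\|_A^2\right)c_A^2(S)\right\}.$$
   Context: $\mathcal{B}(\mathcal{H})$ denotes the bounded linear operators on $\mathcal{H}$. For positive $A$, $\langle x,z\rangle_A=\langle Ax,z\rangle$ and $\|z\|_A=\|A^{1/2}z\|$. $\mathcal{B}_A(\mathcal{H})$ is the set of $S\in\mathcal{B}(\mathcal{H})$ for which some $R\in\mathcal{B}(\mathcal{H})$ satisfies $AR=S^*A$. For operators $T$ bounded with respect to $\|\cdot\|_A$: $\|T\|_A=\sup_{\|z\|_A=1}\|Tz\|_A$, $\omega_A(T)=\sup_{\|z\|_A=1}|\langle Tz,z\rangle_A|$, $c_A(T)=\inf_{\|z\|_A=1}|\langle Tz,z\rangle_A|$, and $d\omega_A(T)=\sup_{\|z\|_A=1}(|\langle Tz,z\rangle_A|^2+\|Tz\|_A^4)^{1/2}$. *)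

(* Defs.v *)
From HB Require Import structures.
From mathcomp Require Import all_boot all_order all_algebra.
From mathcomp Require Import complex.
From mathcomp Require Import boolp classical_sets reals.
Set Implicit Arguments. Unset Strict Implicit. Unset Printing Implicit Defensive.
Import Order.TTheory GRing.Theory Num.Theory.
Local Open Scope classical_set_scope.
Local Open Scope ring_scope.

Section Hilbert.
Variable R : realType.
Local Notation C := (complex R).
Variable V : lmodType C.

Definition is_inner_product (ip : V -> V -> C) : Prop :=
  [/\ (forall (a : C) (x y z : V), ip (a *: x + y) z = a * ip x z + ip y z),
      (forall x y : V, ip y x = Num.conj (ip x y)),
      (forall x : V, 0 <= ip x x) &
      (forall x : V, ip x x = 0 -> x = 0)].

Definition ipnorm (ip : V -> V -> C) (x : V) : R :=
  Num.sqrt (complex.Re (ip x x)).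

Definition ip_complete (ip : V -> V -> C) : Prop :=
  forall u : nat -> V,
    (forall e : R, 0 < e -> exists N : nat, forall m n, (N <= m)%N -> (N <= n)%N ->
        ipnorm ip (u m - u n) < e) ->
    exists l : V, forall e : R, 0 < e -> exists N : nat, forall n, (N <= n)%N ->
        ipnorm ip (u n - l) < e.

Definition is_hilbert (ip : V -> V -> C) : Prop :=
  is_inner_product ip /\ ip_complete ip.

Definition bounded_op (ip : V -> V -> C) (T : V -> V) : Prop :=
  (forall (a : C) (x y : V), T (a *: x + y) = a *: T x + T y) /\
  exists M : R, forall x : V, ipnorm ip (T x) <= M * ipnorm ip x.

Definition positive_op (ip : V -> V -> C) (A : V -> V) : Prop :=
  bounded_op ip A /\ forall x : V, 0 <= ip (A x) x.

(** S in B_A(H): S in B(H) and there is R in B(H) with A R = S^* A,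
    i.e. <A R x, y> = <A x, S y> for all x, y. *)
Definition in_BA (ip : V -> V -> C) (A S : V -> V) : Prop :=
  bounded_op ip S /\
  exists Rop : V -> V, bounded_op ip Rop /\
    forall x y : V, ip (A (Rop x)) y = ip (A x) (S y).

Definition ipA (ip : V -> V -> C) (A : V -> V) (x z : V) : C := ip (A x) z.

Definition normA (ip : V -> V -> C) (A : V -> V) (z : V) : R :=
  Num.sqrt (complex.Re (ip (A z) z)).

Definition cmod (z : C) : R := Normc.normc z.

Definition A_unit (ip : V -> V -> C) (A : V -> V) : set V :=
  [set z | normA ip A z = 1].

Definition opnormA ip A (T : V -> V) : R :=
  sup [set r | exists2 z, A_unit ip A z & r = normA ip A (T z)].

Definition mA ip A (T : V -> V) : R :=
  inf [set r | exists2 z, A_unit ip A z & r = normA ip A (T z)].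

Definition omegaA ip A (T : V -> V) : R :=
  sup [set r | exists2 z, A_unit ip A z & r = cmod (ipA ip A (T z) z)].

Definition cA ip A (T : V -> V) : R :=
  inf [set r | exists2 z, A_unit ip A z & r = cmod (ipA ip A (T z) z)].

Definition domegaA ip A (T : V -> V) : R :=
  sup [set r | exists2 z, A_unit ip A z &
        r = Num.sqrt (cmod (ipA ip A (T z) z) ^+ 2 + normA ip A (T z) ^+ 4)].

End Hilbert.

(* Main.v *)
Require Import Defs.
From HB Require Import structures.
From mathcomp Require Import all_boot all_order all_algebra.
From mathcomp Require Import complex.
From mathcomp Require Import boolp classical_sets reals.
From mathcomp Require Import ring lra.
Import Order.TTheory GRing.Theory Num.Theory.
Local Open Scope ring_scope.

Lemma normcC (R : realType) (z : complex R) : `|z| = real_complex R (Normc.normc z).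
Proof. by case: z => a b; rewrite normc_def. Qed.

Lemma Re_le_normc (R : realType) (z : complex R) : complex.Re z <= Normc.normc z.
Proof.
case: z => a b /=.
have s0 := sqrtr_ge0 (a ^+ 2 + b ^+ 2).
have b2 : 0 <= b ^+ 2 by exact: sqr_ge0.
have a2 : 0 <= a ^+ 2 by exact: sqr_ge0.
have e := sqr_sqrtr (addr_ge0 a2 b2).
case: (lerP a (Num.sqrt (a ^+ 2 + b ^+ 2))) => // h; exfalso; nra.
Qed.
Lemma herm_alg (R : realType) (a b a' b' c d : complex R) :
  c + a' + (b' + d) = c + a + (b + d) ->
  c + 'i * a' + (- 'i * b' + - 'i * ('i * d)) = c + - 'i * a + ('i * b + 'i * (- 'i * d)) ->
  b = a'.
Proof.
move=> /eqP; rewrite -subr_eq0 => /eqP h1 /eqP; rewrite -subr_eq0 => /eqP h2.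
have hi : 'i * 'i + 1 = 0 :> complex R by rewrite -expr2 sqrCi addNr.
have key : 2 * (b - a') = - (c + a' + (b' + d) - (c + a + (b + d)))
   + 'i * (c + 'i * a' + (- 'i * b' + - 'i * ('i * d)) - (c + - 'i * a + ('i * b + 'i * (- 'i * d))))
   - ('i * 'i + 1) * (a' - b' + a - b) by ring.
move: key; rewrite h1 h2 hi mulr0 oppr0 add0r mul0r subr0 => /eqP.
by rewrite mulf_eq0 pnatr_eq0 /= subr_eq0 => /eqP.
Qed.

Section Form.
Variables (R : realType) (V : lmodType (complex R)) (F : V -> V -> complex R).
Hypothesis F1 : forall (a : complex R) x y z, F (a *: x + y) z = a * F x z + F y z.
Hypothesis F2 : forall (a : complex R) x y z, F z (a *: x + y) = a^* * F z x + F z y.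
Hypothesis Fpos : forall x, 0 <= F x x.

Lemma F0l z : F 0 z = 0.
Proof. have := F1 1 0 0 z; rewrite scale1r addr0 mul1r -{1}[F 0 z]addr0 => /addrI; done. Qed.
Lemma F0r z : F z 0 = 0.
Proof. have := F2 1 0 0 z; rewrite scale1r addr0 rmorph1 mul1r -{1}[F z 0]addr0 => /addrI; done. Qed.
Lemma FDl x y z : F (x + y) z = F x z + F y z.
Proof. by rewrite -[x]scale1r F1 mul1r scale1r. Qed.
Lemma FDr x y z : F z (x + y) = F z x + F z y.
Proof. by rewrite -[x]scale1r F2 rmorph1 mul1r scale1r. Qed.
Lemma FZl a x z : F (a *: x) z = a * F x z.
Proof. by rewrite -[a *: x]addr0 F1 F0l addr0. Qed.
Lemma FZr a x z : F z (a *: x) = a^* * F z x.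
Proof. by rewrite -[a *: x]addr0 F2 F0r addr0. Qed.
Lemma FNl x z : F (- x) z = - F x z.
Proof. by rewrite -scaleN1r FZl mulN1r. Qed.
Lemma FNr x z : F z (- x) = - F z x.
Proof. by rewrite -scaleN1r FZr rmorphN1 mulN1r. Qed.

Lemma F_herm x y : F y x = (F x y)^*.
Proof.
have r1 : forall w, (F w w)^* = F w w by move=> w; apply: geC0_conj.
have E1 := r1 (x + y). have E2 := r1 (x + 'i *: y).
rewrite !(FDl, FDr, FZl, FZr) !rmorphD !rmorphM /= !conjCK conjCi !r1 in E1 E2.
exact: herm_alg E1 E2.
Qed.

Lemma F_expand x y s : F (x - s *: y) (x - s *: y) =
  F x x - s^* * F x y - s * (F x y)^* + s * s^* * F y y.
Proof.
rewrite !(FDl, FDr, FNl, FNr, FZl, FZr) -(F_herm x y); ring.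
Qed.

Lemma F_CS x y : F x y * (F x y)^* <= F x x * F y y.
Proof.
set a := F x y.
have bge := Fpos y. have cge := Fpos x.
have [b0|bn0] := eqVneq (F y y) 0.
  rewrite b0 mulr0.
  have [c0|cn0] := eqVneq (F x x) 0.
    have := Fpos (x - a *: y); rewrite F_expand b0 c0 mulr0 addr0 sub0r.
    rewrite [a^* * a]mulrC -opprD oppr_ge0 => h.
    apply: le_trans h; rewrite lerDr; exact: mul_conjC_ge0.
  have cgt : 0 < F x x by rewrite lt_def cn0.
  have := Fpos (y - (a^* / F x x) *: x); rewrite F_expand b0 (F_herm x y) -/a conjCK.
  rewrite fmorph_div /= conjCK (geC0_conj cge) => h.
  have h2 := mulr_ge0 (ltW cgt) h.
  have e : F x x * (0 - a / F x x * a^* - a^* / F x x * a + a^* / F x x * (a / F x x) * F x x)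
     = - (a * a^*) by field.
  by move: h2; rewrite e oppr_ge0.
have bgt : 0 < F y y by rewrite lt_def bn0.
have := Fpos (x - (a / F y y) *: y); rewrite F_expand -/a.
rewrite fmorph_div /= (geC0_conj bge) => h.
have h2 := mulr_ge0 (ltW bgt) h.
have e : F y y * (F x x - a^* / F y y * a - a / F y y * a^* + a / F y y * (a^* / F y y) * F y y)
     = F x x * F y y - a * a^* by field.
by move: h2; rewrite e subr_ge0.
Qed.



Lemma FRe x : real_complex R (complex.Re (F x x)) = F x x.
Proof.
have := Fpos x; case: (F x x) => a b; rewrite lecE /= => /andP[/eqP b0 _].
by rewrite b0.
Qed.

Lemma Re_ge0 x : 0 <= complex.Re (F x x).
Proof. by have := Fpos x; rewrite lecE => /andP[_]. Qed.

Lemma N_sqr x : Num.sqrt (complex.Re (F x x)) ^+ 2 = complex.Re (F x x).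
Proof. exact: sqr_sqrtr (Re_ge0 x). Qed.

Lemma cmod_CS x y : Normc.normc (F x y) <= Num.sqrt (complex.Re (F x x)) * Num.sqrt (complex.Re (F y y)).
Proof.
have h := F_CS x y.
rewrite -normCK -FRe -(FRe y) normcC -rmorphXn -rmorphM lecR /= in h.
have n0 : 0 <= Normc.normc (F x y) by case: (F x y) => a b; exact: sqrtr_ge0.
have s1 := sqrtr_ge0 (complex.Re (F x x)). have s2 := sqrtr_ge0 (complex.Re (F y y)).
have e1 := N_sqr x. have e2 := N_sqr y.
have p0 := mulr_ge0 s1 s2.
rewrite -e1 -e2 -exprMn in h.
case: (lerP (Normc.normc (F x y)) (Num.sqrt (complex.Re (F x x)) * Num.sqrt (complex.Re (F y y)))) => // hl.
exfalso; nra.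
Qed.

End Form.
Lemma bernoulli_le (R : realType) (r : R) n : 1 <= r -> 1 + n%:R * (r - 1) <= r ^+ n.
Proof.
move=> r1; elim: n => [|n IH]; first by rewrite mul0r addr0 expr0.
rewrite exprS -natr1.
have h0 : 0 <= n%:R :> R by exact: ler0n.
have h1 : 0 <= (r - 1) * (r ^+ n - (1 + n%:R * (r - 1))) by apply: mulr_ge0; lra.
have h2 : 0 <= n%:R * (r - 1) * (r - 1) by apply: mulr_ge0; [apply: mulr_ge0|]; lra.
nra.
Qed.

Lemma growth (R : realType) (v : nat -> R) (a M K : R) :
  v 0%N = 1 -> v 1%N = a -> (forall n, 0 <= v n) ->
  (forall k, v k.+1 ^+ 2 <= v k * v k.+2) -> 1 <= M ->
  (forall n, v n ^+ 2 <= K * (M ^+ n) ^+ 2) -> a <= M.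
Proof.
move=> v0 v1 vge lc M1 ub.
case: (lerP a M) => // aM; exfalso.
have a0 : 0 < a by lra.
have P : forall n, a * v n <= v n.+1 /\ a ^+ n <= v n.
  elim=> [|n [IH1 IH2]]; first by rewrite v0 v1 mulr1 expr0.
  have vp : 0 < v n by apply: (lt_le_trans _ IH2); exact: exprn_gt0.
  split; last by rewrite exprS; apply: le_trans IH1; rewrite ler_pM2l.
  have h := lc n. have h1 := vge n.+1. have h2 := vge n.+2.
  have : v n * (a * v n.+1) <= v n * v n.+2.
    have h3 : 0 <= v n.+1 * (v n.+1 - a * v n) by apply: mulr_ge0; lra.
    rewrite expr2 in h; nra.
  by rewrite ler_pM2l.
set r := a / M.
have M0 : 0 < M by lra.
have r1 : 1 <= r by rewrite /r ler_pdivlMr //; lra.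
have Hn : forall n, 1 + n%:R * (r - 1) <= K.
  move=> n; apply: le_trans (@bernoulli_le _ r n r1) _.
  have rn1 : 1 <= r ^+ n by exact: exprn_ege1.
  have Mn : 0 < M ^+ n by exact: exprn_gt0.
  have e : a ^+ n = r ^+ n * M ^+ n by rewrite -exprMn /r divfK // gt_eqF.
  have := ub n; have [_ h] := P n.
  have hv := vge n.
  have : (a ^+ n) ^+ 2 <= K * (M ^+ n) ^+ 2.
    apply: le_trans (ub n); rewrite ler_pXn2r // ?nnegrE //; apply: ltW; exact: exprn_gt0.
  rewrite e exprMn ler_pM2r ?exprn_gt0 // => h3 _.
  nra.
have rg : 0 < r - 1.
  rewrite subr_gt0 /r ltr_pdivlMr //; lra.
have K0 : 0 <= Num.max 0 K by rewrite le_max lexx.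
have := archi_boundP (divr_ge0 K0 (ltW rg)).
set N := Num.Def.archi_bound _ => hN.
have := Hn N.
rewrite ltr_pdivrMr // in hN.
have : K <= Num.max 0 K by rewrite le_max lexx orbT.
lra.
Qed.

Section Main.
Variables (R : realType) (V : lmodType (complex R)) (ip : V -> V -> complex R) (A S Rop : V -> V).
Hypothesis hip : is_inner_product ip.
Hypothesis hA : positive_op ip A.
Hypothesis hSb : bounded_op ip S.
Hypothesis hR : bounded_op ip Rop.
Hypothesis hRS : forall x y : V, ip (A (Rop x)) y = ip (A x) (S y).

Lemma ip1 a x y z : ip (a *: x + y) z = a * ip x z + ip y z.
Proof. by case: hip. Qed.
Lemma ipH x y : ip y x = (ip x y)^*.
Proof. by case: hip. Qed.
Lemma ippos x : 0 <= ip x x.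
Proof. by case: hip. Qed.
Lemma ip2 a x y z : ip z (a *: x + y) = a^* * ip z x + ip z y.
Proof. by rewrite ipH ip1 rmorphD rmorphM /= -!ipH. Qed.
Lemma Alin a x y : A (a *: x + y) = a *: A x + A y.
Proof. by case: hA => [[]]. Qed.
Lemma Apos x : 0 <= ip (A x) x.
Proof. by case: hA. Qed.

Definition B x y := ip (A x) y.
Lemma B1 a x y z : B (a *: x + y) z = a * B x z + B y z.
Proof. by rewrite /B Alin ip1. Qed.
Lemma B2 a x y z : B z (a *: x + y) = a^* * B z x + B z y.
Proof. by rewrite /B ip2. Qed.
Lemma Bpos x : 0 <= B x x.
Proof. exact: Apos. Qed.

Definition nA z := Num.sqrt (complex.Re (B z z)).
Definition nI z := Num.sqrt (complex.Re (ip z z)).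

Lemma nA_ge0 z : 0 <= nA z. Proof. exact: sqrtr_ge0. Qed.
Lemma nI_ge0 z : 0 <= nI z. Proof. exact: sqrtr_ge0. Qed.
Lemma nA_sqr z : nA z ^+ 2 = complex.Re (B z z).
Proof. apply: (@N_sqr _ _ B); try exact: B1; try exact: B2; try exact: Bpos. Qed.
Lemma nI_sqr z : nI z ^+ 2 = complex.Re (ip z z).
Proof. apply: (@N_sqr _ _ ip); try exact: ip1; try exact: ip2; try exact: ippos. Qed.
Lemma B_CS x y : Normc.normc (B x y) <= nA x * nA y.
Proof. apply: (@cmod_CS _ _ B); try exact: B1; try exact: B2; try exact: Bpos. Qed.
Lemma I_CS x y : Normc.normc (ip x y) <= nI x * nI y.
Proof. apply: (@cmod_CS _ _ ip); try exact: ip1; try exact: ip2; try exact: ippos. Qed.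
Lemma B_herm x y : B y x = (B x y)^*.
Proof. apply: (@F_herm _ _ B); try exact: B1; try exact: B2; try exact: Bpos. Qed.

Definition T x := Rop (S x).

Lemma T_sym x y : B (T x) y = B x (T y).
Proof.
rewrite (B_herm (T y) x) /B /T !hRS -/(B (S y) (S x)) -/(B (S x) (S y)).
by rewrite (B_herm (S x) (S y)) conjCK.
Qed.

Lemma A_bound : exists MA, 0 <= MA /\ forall x, nA x ^+ 2 <= MA * nI x ^+ 2.
Proof.
case: hA => [[_ [MA hMA]] _].
exists (Num.max 0 MA); split; first by rewrite le_max lexx.
move=> x; rewrite nA_sqr.
have h1 := Re_le_normc _ (B x x).
have h2 := I_CS (A x) x.
have h3 : nI (A x) <= MA * nI x := hMA x.
have h4 : MA <= Num.max 0 MA by rewrite le_max lexx orbT.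
have h5 := nI_ge0 x. have h6 := nI_ge0 (A x).
have h7 : 0 <= Num.max 0 MA by rewrite le_max lexx.
rewrite /B in h1 *.
have h8 : 0 <= (MA * nI x - nI (A x)) * nI x by apply: mulr_ge0; lra.
have h9 : 0 <= (Num.max 0 MA - MA) * (nI x * nI x) by apply: mulr_ge0; [lra | apply: mulr_ge0].
rewrite expr2; nra.
Qed.

Lemma T_bound : exists M, 1 <= M /\ forall x, nI (T x) <= M * nI x.
Proof.
case: hR => _ [MR hMR]; case: hSb => _ [MS hMS].
exists (Num.max 1 MR * Num.max 1 MS).
have a1 : 1 <= Num.max 1 MR by rewrite le_max lexx.
have a2 : 1 <= Num.max 1 MS by rewrite le_max lexx.
have a3 : MR <= Num.max 1 MR by rewrite le_max lexx orbT.
have a4 : MS <= Num.max 1 MS by rewrite le_max lexx orbT.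
split; first nra.
move=> x.
have h1 : nI (Rop (S x)) <= MR * nI (S x) := hMR (S x).
have h2 : nI (S x) <= MS * nI x := hMS x. rewrite /T.
have n0 := nI_ge0 x. have n1 := nI_ge0 (S x).
have q1 : MR * nI (S x) <= Num.max 1 MR * nI (S x) by apply: ler_wpM2r.
have q2 : Num.max 1 MR * nI (S x) <= Num.max 1 MR * (MS * nI x) by apply: ler_wpM2l => //; lra.
have q3 : Num.max 1 MR * (MS * nI x) <= Num.max 1 MR * (Num.max 1 MS * nI x).
  by apply: ler_wpM2l; [lra | apply: ler_wpM2r].
rewrite -mulrA; lra.
Qed.

Lemma S_unit_bound : exists M, 1 <= M /\
  forall z, nA z = 1 -> nA (S z) ^+ 2 <= M.
Proof.
have [M [M1 hM]] := T_bound.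
have [MA [MA0 hMA]] := A_bound.
exists M; split => // z z1.
have hT : nA (T z) <= M.
  pose v n := nA (iter n T z).
  apply: (@growth _ v _ M (MA * nI z ^+ 2)) => //.
  - by move=> n; exact: nA_ge0.
  - move=> k; rewrite /v /=.
    set u := iter k T z.
    rewrite nA_sqr T_sym.
    apply: le_trans (Re_le_normc _ _) _; exact: B_CS.
  - move=> n; rewrite /v.
    have hi : nI (iter n T z) <= M ^+ n * nI z.
      elim: n => [|n IH] /=; first by rewrite expr0 mul1r.
      apply: le_trans (hM _) _; rewrite exprS -mulrA; apply: ler_wpM2l => //; lra.
    apply: le_trans (hMA _) _.
    rewrite mulrAC -mulrA ler_wpM2l // -exprMn.
    rewrite ler_pXn2r ?nnegrE //; [exact: nI_ge0 | ].
    apply: mulr_ge0; [apply: exprn_ge0; lra | exact: nI_ge0].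
rewrite nA_sqr.
have e : B (S z) (S z) = B (T z) z by rewrite /B /T hRS.
rewrite e; apply: le_trans (Re_le_normc _ _) _.
apply: le_trans (B_CS _ _) _; rewrite z1 mulr1 //.
Qed.

End Main.


Lemma sqrt_ub (R : realType) (x t : R) : 0 <= x -> 0 <= t -> x ^+ 2 <= t -> x <= Num.sqrt t.
Proof.
move=> x0 t0 h; have s0 := sqrtr_ge0 t; have e := sqr_sqrtr t0.
case: (lerP x (Num.sqrt t)) => // hl; exfalso; nra.
Qed.

Section FinalReal.
Local Open Scope classical_set_scope.
Lemma final_real (R : realType) (T : Type) (U : set T) (p q : T -> R) (M : R) :
  (forall z, U z -> 0 <= p z) -> (forall z, U z -> p z <= q z) ->
  (forall z, U z -> q z <= M) ->
  Num.max ((1 + inf [set r | exists2 z, U z & r = q z] ^+ 2) *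
             sup [set r | exists2 z, U z & r = p z] ^+ 2)
          ((1 + sup [set r | exists2 z, U z & r = q z] ^+ 2) *
             inf [set r | exists2 z, U z & r = p z] ^+ 2)
  <= sup [set r | exists2 z, U z & r = Num.sqrt (p z ^+ 2 + q z ^+ 4)] ^+ 2.
Proof.
move=> hp0 hpq hqM.
set EP := [set r | exists2 z, U z & r = p z].
set EQ := [set r | exists2 z, U z & r = q z].
set ED := [set r | exists2 z, U z & r = Num.sqrt (p z ^+ 2 + q z ^+ 4)].
have [[z0 Uz0]|nz] := pselect (exists z, U z); last first.
  have e : forall (f : T -> R), [set r | exists2 z, U z & r = f z] = set0.
    move=> f; apply/seteqP; split => r //= [z Uz _]; exfalso; apply: nz; by exists z.
  rewrite /EP /EQ /ED !e !(sup0, inf0) !expr2 !mulr0 maxxx.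
  by [].
have hq0 : forall z, U z -> 0 <= q z by move=> z Uz; apply: le_trans (hpq z Uz); exact: hp0.
have nP : EP !=set0 by exists (p z0), z0.
have nQ : EQ !=set0 by exists (q z0), z0.
have nD : ED !=set0 by exists (Num.sqrt (p z0 ^+ 2 + q z0 ^+ 4)), z0.
have hubP : has_ubound EP.
  exists M => y [z Uz ->]; apply: le_trans (hqM z Uz); exact: hpq.
have hubQ : has_ubound EQ by exists M => y [z Uz ->]; exact: hqM.
have hubD : has_ubound ED.
  exists (1 + M ^+ 2 + M ^+ 4) => y [z Uz ->].
  have a1 := hp0 z Uz. have a2 := hpq z Uz. have a3 := hqM z Uz. have a4 := hq0 z Uz.
  have b1 : p z ^+ 2 <= M ^+ 2 by rewrite ler_pXn2r // ?nnegrE; lra.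
  have b2 : q z ^+ 4 <= M ^+ 4 by rewrite ler_pXn2r // ?nnegrE; lra.
  have s0 : 0 <= p z ^+ 2 + q z ^+ 4 by apply: addr_ge0; [exact: sqr_ge0 | apply: exprn_ge0; exact: hq0].
  have e := sqr_sqrtr s0. have s1 := sqrtr_ge0 (p z ^+ 2 + q z ^+ 4).
  set s := Num.sqrt _ in e s1 *.
  nra.
have hlbP : has_lbound EP by exists 0 => y [z Uz ->]; exact: hp0.
have hlbQ : has_lbound EQ by exists 0 => y [z Uz ->]; exact: hq0.
set d := sup ED. set w := sup EP. set m := inf EQ. set Qs := sup EQ. set c := inf EP.
have d2 : forall z, U z -> p z ^+ 2 + q z ^+ 4 <= d ^+ 2.
  move=> z Uz.
  have s0 : 0 <= p z ^+ 2 + q z ^+ 4 by apply: addr_ge0; [exact: sqr_ge0 | apply: exprn_ge0; exact: hq0].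
  rewrite -(sqr_sqrtr s0) ler_pXn2r // ?nnegrE ?sqrtr_ge0 //.
    by apply: ub_le_sup => //; exists z.
  apply: le_trans (sqrtr_ge0 (p z ^+ 2 + q z ^+ 4)) _.
  by apply: ub_le_sup => //; exists z.
have m0 : 0 <= m by apply: lb_le_inf => // y [z Uz ->]; exact: hq0.
have mq : forall z, U z -> m <= q z by move=> z Uz; apply: ge_inf => //; exists z.
have c0 : 0 <= c by apply: lb_le_inf => // y [z Uz ->]; exact: hp0.
have cp : forall z, U z -> c <= p z by move=> z Uz; apply: ge_inf => //; exists z.
have w0 : 0 <= w.
  apply: le_trans (hp0 z0 Uz0) _; by apply: ub_le_sup => //; exists z0.
have Qs0 : 0 <= Qs.
  apply: le_trans (hq0 z0 Uz0) _; by apply: ub_le_sup => //; exists z0.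
have dd0 : 0 <= d ^+ 2 by exact: sqr_ge0.
rewrite ge_max; apply/andP; split.
  have m1 : 0 < 1 + m ^+ 2 by have := sqr_ge0 m; lra.
  set t := d ^+ 2 / (1 + m ^+ 2).
  have t0 : 0 <= t by apply: divr_ge0 => //; lra.
  have pt : forall z, U z -> p z ^+ 2 <= t.
    move=> z Uz; rewrite /t ler_pdivlMr //.
    have a1 := hp0 z Uz. have a2 := hpq z Uz. have a3 := mq z Uz.
    have b1 : m ^+ 2 <= q z ^+ 2 by rewrite ler_pXn2r // ?nnegrE; lra.
    have b2 : p z ^+ 2 <= q z ^+ 2 by rewrite ler_pXn2r // ?nnegrE; lra.
    have b3 := ler_pM (sqr_ge0 m) (sqr_ge0 (p z)) b1 b2.
    have := d2 z Uz.
    have e : q z ^+ 4 = q z ^+ 2 * q z ^+ 2 by rewrite -exprD.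
    rewrite e; nra.
  have ws : w <= Num.sqrt t.
    apply: ge_sup => // y [z Uz ->]; apply: sqrt_ub => //; [exact: hp0 | exact: pt].
  have w2 : w ^+ 2 <= t.
    rewrite -(sqr_sqrtr t0) ler_pXn2r // ?nnegrE //; exact: sqrtr_ge0.
  have e : (1 + m ^+ 2) * t = d ^+ 2 by rewrite /t mulrC divfK // gt_eqF.
  rewrite -e; apply: ler_wpM2l => //; lra.
have [cz|cn] := eqVneq c 0.
  by rewrite cz [0 ^+ 2]expr2 !mulr0.
have cg : 0 < c by rewrite lt_def cn c0.
have c2 : 0 < c ^+ 2 by exact: exprn_gt0.
have key : forall z, U z -> c ^+ 2 + q z ^+ 2 * c ^+ 2 <= d ^+ 2.
  move=> z Uz.
  have a1 := hp0 z Uz. have a2 := hpq z Uz. have a3 := cp z Uz.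
  have b1 : c ^+ 2 <= p z ^+ 2 by rewrite ler_pXn2r // ?nnegrE; lra.
  have b2 : c ^+ 2 <= q z ^+ 2 by rewrite ler_pXn2r // ?nnegrE; lra.
  have b3 := ler_pM (sqr_ge0 (q z)) (sqr_ge0 c) (lexx (q z ^+ 2)) b2.
  have := d2 z Uz.
  have e : q z ^+ 4 = q z ^+ 2 * q z ^+ 2 by rewrite -exprD.
  rewrite e; nra.
set t := (d ^+ 2 - c ^+ 2) / c ^+ 2.
have t0 : 0 <= t.
  apply: divr_ge0; last exact: ltW.
  have := key z0 Uz0; have := sqr_ge0 (q z0); nra.
have qt : forall z, U z -> q z ^+ 2 <= t.
  move=> z Uz; rewrite /t ler_pdivlMr //; have := key z Uz; lra.
have Qss : Qs <= Num.sqrt t.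
  apply: ge_sup => // y [z Uz ->]; apply: sqrt_ub => //; [exact: hq0 | exact: qt].
have Q2 : Qs ^+ 2 <= t.
  rewrite -(sqr_sqrtr t0) ler_pXn2r // ?nnegrE //; exact: sqrtr_ge0.
have e : t * c ^+ 2 = d ^+ 2 - c ^+ 2 by rewrite /t divfK // gt_eqF.
have : Qs ^+ 2 * c ^+ 2 <= t * c ^+ 2 by apply: ler_wpM2r => //; exact: ltW.
rewrite e; lra.
Qed.
End FinalReal.

Unset Implicit Arguments.

Theorem theorem2p29 (R : realType) (V : lmodType (complex R))
  (ip : V -> V -> complex R) (A S : V -> V) :
  is_hilbert ip ->
  positive_op ip A ->
  in_BA ip A S ->
  Num.max ((1 + mA ip A S ^+ 2) * omegaA ip A S ^+ 2)
          ((1 + opnormA ip A S ^+ 2) * cA ip A S ^+ 2)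
  <= domegaA ip A S ^+ 2.
Proof.
move=> [hip _] hA [hSb [Rop [hR hRS]]].
have [M [M1 hM]] := S_unit_bound R V ip A S Rop hip hA hSb hR hRS.
apply: (@final_real R V (A_unit ip A) (fun z => cmod (ipA ip A (S z) z))
          (fun z => normA ip A (S z)) M).
- move=> z _; rewrite /cmod; case: (ipA ip A (S z) z) => a b; exact: sqrtr_ge0.
- move=> z z1.
  have h := B_CS R V ip A hip hA (S z) z.
  rewrite /A_unit /= in z1.
  have z1' : nA R V ip A z = 1 by [].
  by move: h; rewrite z1' mulr1.
- move=> z z1.
  have h := hM z z1.
  have q0 : 0 <= normA ip A (S z) by exact: sqrtr_ge0.
  have h' : normA ip A (S z) ^+ 2 <= M := h.
  nra.
Qed.
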